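(* Let $N\ge 3$ be odd, $p<0$, and let $0\le r_1<r_2<\dots<r_N\le 1$ be distinct points. Define $\sigma\in S_N$ by $\sigma(1)=1$, $\sigma(i)=\frac{N-i+3}{2}$ for even $i>1$, and $\sigma(i)=\frac{2N-i+3}{2}$ for odd $i>1$. Then $h^*=h[\sigma]$ is an optimal Hamiltonian cycle: $E(h^* )\le E(h)$ for every Hamiltonian cycle $h$. (In $h^*$ each vertex $r_a$ is adjacent to $r_{a+(N-1)/2}$ and $r_{a+(N+1)/2}$, indices taken mod $N$ in $\{1,\dots,N\}$.)
   Context: The points are the vertices of the complete graph $\mathcal K_N$. For $p\in\mathbb R$ the weight of the edge $\{r_i,r_j\}$ is $w_{ij}=|r_i-r_j|^p$, and the cost of a Hamiltonian cycle $h$ is $E(h)=\sum_{e\in h}w_e$. For $\sigma\in S_N$, $h[\sigma]$ denotes the Hamiltonian cycle with edges $\{r_{\sigma(i)},r_{\sigma(i+1)}\}$, $i=1,\dots,N$, with $\sigma(N+1):=\sigma(1)$. *)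

(* Defs.v *)
From Stdlib Require Import Reals Arith.
Open Scope R_scope.

(* Points are indexed 1..N: r : nat -> R, only r 1, ..., r N matter. *)

(* Edge weight w_{ij} = |r_i - r_j|^p (bases are > 0 since points are distinct). *)
Definition weight (p : R) (x y : R) : R := Rpower (Rabs (x - y)) p.

Fixpoint sumR (f : nat -> R) (n : nat) : R :=
  match n with
  | O => 0
  | S k => sumR f k + f (S k)
  end.

Definition cnext (N i : nat) : nat := if Nat.eqb i N then 1%nat else S i.

Definition is_perm (N : nat) (tau : nat -> nat) : Prop :=
  (forall i, (1 <= i <= N)%nat -> (1 <= tau i <= N)%nat) /\
  (forall i j, (1 <= i <= N)%nat -> (1 <= j <= N)%nat -> tau i = tau j -> i = j).

Definition cycle_cost (N : nat) (p : R) (r : nat -> R) (tau : nat -> nat) : R :=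
  sumR (fun i => weight p (r (tau i)) (r (tau (cnext N i)))) N.

Definition sigma_opt (N i : nat) : nat :=
  if Nat.eqb i 1 then 1%nat
  else if Nat.even i then ((N - i + 3) / 2)%nat
  else ((2 * N - i + 3) / 2)%nat.

(* Main.v *)
Require Import Defs.
From Stdlib Require Import Reals Arith Lra Lia List Permutation.
Open Scope R_scope.

Lemma Rpow_decr (p s t : R) : p < 0 -> 0 < s -> s <= t -> Rpower t p <= Rpower s p.
Proof.
  intros hp hs hst. unfold Rpower.
  destruct (Req_dec s t) as [->|hne]; [lra|].
  apply Rlt_le, exp_increasing.
  assert (ln s < ln t) by (apply ln_increasing; lra).
  nra.
Qed.

Lemma Rpow_conv (p s t h : R) : p < 0 -> 0 < s -> s <= t -> 0 <= h ->
  Rpower (s + h) p - Rpower s p <= Rpower (t + h) p - Rpower t p.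
Proof.
  intros hp hs hst hh.
  destruct (Req_dec s t) as [->|hne]; [lra|].
  set (g := fun x => Rpower (x + h) p - Rpower x p).
  set (g' := fun x => p * Rpower (x + h) (p - 1) * 1 - p * Rpower x (p - 1)).
  destruct (MVT_cor2 g g' s t) as [c [hc1 hc2]]; [lra| |].
  - intros c hc. unfold g, g'. apply derivable_pt_lim_minus.
    + apply (derivable_pt_lim_comp (fun x => x + h) (fun u => Rpower u p)).
      * replace 1 with (1 + 0) by ring. apply derivable_pt_lim_plus.
        apply derivable_pt_lim_id. apply derivable_pt_lim_const.
      * apply derivable_pt_lim_power. lra.
    + apply derivable_pt_lim_power. lra.
  - unfold g in hc1.
    assert (Rpower (c + h) (p - 1) <= Rpower c (p - 1)) by (apply Rpow_decr; lra).
    assert (hg : 0 <= g' c) by (unfold g'; nra).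
    assert (0 <= g' c * (t - s)) by (apply Rmult_le_pos; lra).
    lra.
Qed.

Fixpoint lsum (l : list R) : R := match l with nil => 0 | x :: l' => x + lsum l' end.

Lemma lsum_app l1 l2 : lsum (l1 ++ l2) = lsum l1 + lsum l2.
Proof. induction l1; simpl; [ring| rewrite IHl1; ring]. Qed.

Lemma lsum_perm l1 l2 : Permutation l1 l2 -> lsum l1 = lsum l2.
Proof. induction 1; simpl; try lra. Qed.

Lemma sumR_seq g n : sumR g n = lsum (map g (seq 1 n)).
Proof.
  induction n; [reflexivity|].
  cbn [sumR]. rewrite seq_S, map_app, lsum_app, IHn. simpl. replace (1 + n)%nat with (S n) by lia. ring.
Qed.

Lemma sumR_perm N tau g : is_perm N tau -> sumR (fun i => g (tau i)) N = sumR g N.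
Proof.
  intros [h1 h2]. rewrite !sumR_seq.
  replace (map (fun i => g (tau i)) (seq 1 N)) with (map g (map tau (seq 1 N)))
    by (rewrite map_map; reflexivity).
  apply lsum_perm, Permutation_map.
  apply NoDup_Permutation_bis.
  - apply FinFun.Injective_map_NoDup_in; [|apply seq_NoDup].
    intros x y hx hy. apply in_seq in hx. apply in_seq in hy. apply h2; lia.
  - rewrite length_map; lia.
  - intros z hz. apply in_map_iff in hz. destruct hz as [x [<- hx]].
    apply in_seq in hx. apply in_seq. specialize (h1 x ltac:(lia)). lia.
Qed.

Lemma sumR_plus f g n : sumR (fun i => f i + g i) n = sumR f n + sumR g n.
Proof. induction n; simpl; [ring| rewrite IHn; ring]. Qed.

Lemma sumR_le f g n : (forall i, (1 <= i <= n)%nat -> f i <= g i) -> sumR f n <= sumR g n.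
Proof. induction n; simpl; intros H; [lra|].
  apply Rplus_le_compat; [apply IHn; intros; apply H; lia| apply H; lia]. Qed.

Lemma sumR_eq f g n : (forall i, (1 <= i <= n)%nat -> f i = g i) -> sumR f n = sumR g n.
Proof. induction n; simpl; intros H; [lra|].
  rewrite IHn, H; [reflexivity|lia|intros; apply H; lia]. Qed.

Lemma cnext_perm N : (1 <= N)%nat -> is_perm N (cnext N).
Proof.
  intros hN; unfold cnext; split.
  - intros i hi. destruct (Nat.eqb_spec i N); lia.
  - intros i j hi hj. destruct (Nat.eqb_spec i N), (Nat.eqb_spec j N); lia.
Qed.

Lemma perm_comp N s t : is_perm N s -> is_perm N t -> is_perm N (fun i => s (t i)).
Proof.
  intros [a1 a2] [b1 b2]; split.
  - intros i hi. apply a1, b1, hi.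
  - intros i j hi hj e. apply b2; auto.
Qed.

Definition F p (r : nat -> R) a b := weight p (r a) (r b).
Definition term p r m j := F p r (S j) (m + 1 + j) - F p r j (m + 1 + j).
Definition Q p r m n := sumR (term p r m) n.
Definition cc p r m := (F p r 1 (m + 1) - Q p r m m) / 2.
Definition yv p r m i :=
  if (i <=? m + 1)%nat then cc p r m + Q p r m (i - 1)
  else F p r (i - m - 1) i - cc p r m - Q p r m (i - m - 2).

Lemma F_sym p r a b : F p r a b = F p r b a.
Proof. unfold F, weight. rewrite Rabs_minus_sym. reflexivity. Qed.

Lemma F_val p r a b : r a < r b -> F p r a b = Rpower (r b - r a) p.
Proof. intros h. unfold F, weight. rewrite Rabs_minus_sym, Rabs_right; [reflexivity|lra]. Qed.

Lemma Qpred p r m a : (1 <= a)%nat -> Q p r m a = Q p r m (a - 1) + term p r m a.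
Proof. intros h. destruct a; [lia|]. unfold Q; simpl. rewrite Nat.sub_0_r. reflexivity. Qed.

Lemma mono_up (D : nat -> R) lo hi :
  (forall k, (lo <= k)%nat -> (k < hi)%nat -> D k <= D (S k)) ->
  forall a b, (lo <= a)%nat -> (a <= b)%nat -> (b <= hi)%nat -> D a <= D b.
Proof.
  intros H a b ha hab hb. induction b.
  - assert (a = 0)%nat by lia. subst; lra.
  - destruct (Nat.eq_dec a (S b)) as [->|hne]; [lra|].
    eapply Rle_trans; [apply IHb; lia| apply H; lia].
Qed.

Lemma mono_down (D : nat -> R) lo hi :
  (forall k, (lo <= k)%nat -> (k < hi)%nat -> D (S k) <= D k) ->
  forall a b, (lo <= a)%nat -> (a <= b)%nat -> (b <= hi)%nat -> D b <= D a.
Proof.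
  intros H a b ha hab hb.
  pose proof (mono_up (fun k => - D k) lo hi) as M.
  assert (- D a <= - D b); [apply M; auto; intros k h1 h2; specialize (H k h1 h2); lra| lra].
Qed.


Lemma yL p r m i : (i <= m + 1)%nat -> yv p r m i = cc p r m + Q p r m (i - 1).
Proof. intros h. unfold yv. destruct (Nat.leb_spec i (m+1)); [reflexivity|lia]. Qed.

Lemma yH p r m k : (1 <= k)%nat -> yv p r m (m + 1 + k) = F p r k (m + 1 + k) - cc p r m - Q p r m (k - 1).
Proof. intros h. unfold yv. destruct (Nat.leb_spec (m+1+k) (m+1)); [lia|].
  replace (m + 1 + k - m - 1)%nat with k by lia. replace (m + 1 + k - m - 2)%nat with (k-1)%nat by lia.
  reflexivity. Qed.

Lemma tA p r m k : (1 <= k <= m)%nat -> yv p r m k + yv p r m (m + 1 + k) = F p r k (m + 1 + k).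
Proof. intros h. rewrite yL, yH by lia. ring. Qed.

Lemma tB p r m k : (1 <= k <= m)%nat -> yv p r m (S k) + yv p r m (m + 1 + k) = F p r (S k) (m + 1 + k).
Proof. intros h. rewrite yL, yH by lia. replace (S k - 1)%nat with k by lia.
  rewrite (Qpred p r m k) by lia. unfold term. ring. Qed.

Lemma tC p r m : yv p r m 1 + yv p r m (m + 1) = F p r 1 (m + 1).
Proof. rewrite !yL by lia. replace (m + 1 - 1)%nat with m by lia.
  replace (1 - 1)%nat with 0%nat by lia.
  assert (Q p r m 0 = 0) by reflexivity. unfold cc. lra. Qed.


Definition incr (r : nat -> R) N := forall i j, (1 <= i)%nat -> (i < j)%nat -> (j <= N)%nat -> r i < r j.

Lemma L1 p r N a X Y : p < 0 -> incr r N -> (1 <= a)%nat -> (a + 1 < X)%nat -> (X <= Y)%nat -> (Y <= N)%nat ->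
  F p r a X - F p r (S a) X <= F p r a Y - F p r (S a) Y.
Proof.
  intros hp hr ha hX hXY hY.
  assert (r a < r (S a)) by (apply hr; lia).
  assert (r (S a) < r X) by (apply hr; lia).
  assert (r X <= r Y) by (destruct (Nat.eq_dec X Y); [subst; lra| apply Rlt_le, hr; lia]).
  rewrite !F_val by lra.
  replace (r X - r a) with ((r X - r (S a)) + (r (S a) - r a)) by ring.
  replace (r Y - r a) with ((r Y - r (S a)) + (r (S a) - r a)) by ring.
  apply Rpow_conv; lra.
Qed.

Lemma Fmono p r N i j k l : p < 0 -> incr r N -> (1 <= i)%nat -> (1 <= k)%nat -> (i < j)%nat -> (k < l)%nat ->
  (j <= N)%nat -> (l <= N)%nat -> r j - r i <= r l - r k -> F p r k l <= F p r i j.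
Proof.
  intros hp hr h1 h2 h3 h4 h5 h6 h7.
  assert (r i < r j) by (apply hr; lia). assert (r k < r l) by (apply hr; lia).
  rewrite !F_val by lra. apply Rpow_decr; lra.
Qed.

Lemma rle r N i j : incr r N -> (1 <= i)%nat -> (i <= j)%nat -> (j <= N)%nat -> r i <= r j.
Proof. intros hr h1 h2 h3. destruct (Nat.eq_dec i j); [subst; lra| apply Rlt_le, hr; lia]. Qed.

Lemma case1 p r m a b : p < 0 -> incr r (2*m+1) -> (1 <= a <= m + 1)%nat -> (1 <= b <= m)%nat ->
  yv p r m a + yv p r m (m + 1 + b) <= F p r a (m + 1 + b).
Proof.
  intros hp hr ha hb. rewrite yL, yH by lia.
  set (D := fun a => F p r a (m + 1 + b) - Q p r m (a - 1)).
  assert (D b <= D a); [|unfold D in *; lra].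
  assert (Hstep : forall k, (1 <= k)%nat -> (k <= m)%nat ->
     D (S k) - D k = (F p r (S k) (m+1+b) - F p r k (m+1+b)) - (F p r (S k) (m+1+k) - F p r k (m+1+k))).
  { intros k h1 h2. unfold D. replace (S k - 1)%nat with k by lia. rewrite (Qpred p r m k) by lia.
    unfold term. ring. }
  destruct (Nat.le_gt_cases b a).
  - apply (mono_up D b (m+1)); try lia.
    intros k h1 h2. specialize (Hstep k ltac:(lia) ltac:(lia)).
    pose proof (L1 p r (2*m+1) k (m+1+b) (m+1+k) hp hr ltac:(lia) ltac:(lia) ltac:(lia) ltac:(lia)). lra.
  - apply (mono_down D 1 b); try lia.
    intros k h1 h2. specialize (Hstep k ltac:(lia) ltac:(lia)).
    pose proof (L1 p r (2*m+1) k (m+1+k) (m+1+b) hp hr ltac:(lia) ltac:(lia) ltac:(lia) ltac:(lia)). lra.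
Qed.

Lemma term_nonneg p r m j : p < 0 -> incr r (2*m+1) -> (1 <= j <= m)%nat -> 0 <= term p r m j.
Proof.
  intros hp hr hj. unfold term.
  pose proof (Fmono p r (2*m+1) (S j) (m+1+j) j (m+1+j) hp hr ltac:(lia) ltac:(lia) ltac:(lia) ltac:(lia) ltac:(lia) ltac:(lia)).
  assert (r j <= r (S j)) by (apply (rle r (2*m+1)); auto; lia). lra.
Qed.

Lemma case2 p r m a b : p < 0 -> incr r (2*m+1) -> (1 <= a)%nat -> (a < b)%nat -> (b <= m + 1)%nat ->
  yv p r m a + yv p r m b <= F p r a b.
Proof.
  intros hp hr ha hab hb. rewrite !yL by lia.
  set (E := fun a b => F p r a b - Q p r m (a - 1) + Q p r m m - Q p r m (b - 1)).
  assert (F p r 1 (m+1) <= E a b); [|unfold E, cc in *; lra].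
  assert (E1 : E 1%nat (m+1)%nat = F p r 1 (m+1)).
  { unfold E. replace (m+1-1)%nat with m by lia. simpl. unfold Q at 1. simpl. ring. }
  assert (E a (m+1)%nat <= E a b).
  { apply (mono_down (E a) b (m+1)); try lia.
    intros k h1 h2. unfold E. replace (S k - 1)%nat with k by lia.
    rewrite (Qpred p r m k) by lia.
    pose proof (term_nonneg p r m k hp hr ltac:(lia)).
    pose proof (Fmono p r (2*m+1) a k a (S k) hp hr ltac:(lia) ltac:(lia) ltac:(lia) ltac:(lia) ltac:(lia) ltac:(lia)
      ltac:(pose proof (rle r (2*m+1) k (S k) hr ltac:(lia) ltac:(lia) ltac:(lia)); lra)).
    lra. }
  assert (E 1%nat (m+1)%nat <= E a (m+1)%nat).
  { apply (mono_up (fun a => E a (m+1)%nat) 1 a); try lia.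
    intros k h1 h2. unfold E. replace (S k - 1)%nat with k by lia.
    rewrite (Qpred p r m k) by lia. unfold term.
    pose proof (L1 p r (2*m+1) k (m+1) (m+1+k) hp hr ltac:(lia) ltac:(lia) ltac:(lia) ltac:(lia)).
    lra. }
  lra.
Qed.

Lemma case3 p r m a b : p < 0 -> incr r (2*m+1) -> (1 <= a)%nat -> (a < b)%nat -> (b <= m)%nat ->
  yv p r m (m+1+a) + yv p r m (m+1+b) <= F p r (m+1+a) (m+1+b).
Proof.
  intros hp hr ha hab hb.
  pose proof (case1 p r m 1 a hp hr ltac:(lia) ltac:(lia)).
  pose proof (case1 p r m (m+1) b hp hr ltac:(lia) ltac:(lia)).
  pose proof (tC p r m).
  pose proof (Fmono p r (2*m+1) 1 (m+1) 1 (m+1+a) hp hr ltac:(lia) ltac:(lia) ltac:(lia) ltac:(lia) ltac:(lia) ltac:(lia)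
      ltac:(pose proof (rle r (2*m+1) (m+1) (m+1+a) hr ltac:(lia) ltac:(lia) ltac:(lia)); lra)).
  pose proof (Fmono p r (2*m+1) (m+1+a) (m+1+b) (m+1) (m+1+b) hp hr ltac:(lia) ltac:(lia) ltac:(lia) ltac:(lia) ltac:(lia) ltac:(lia)
      ltac:(pose proof (rle r (2*m+1) (m+1) (m+1+a) hr ltac:(lia) ltac:(lia) ltac:(lia)); lra)).
  lra.
Qed.

Lemma feas p r m i j : p < 0 -> incr r (2*m+1) -> (1 <= i <= 2*m+1)%nat -> (1 <= j <= 2*m+1)%nat -> i <> j ->
  yv p r m i + yv p r m j <= F p r i j.
Proof.
  intros hp hr hi hj hij.
  assert (W : forall i j, (1 <= i)%nat -> (i < j)%nat -> (j <= 2*m+1)%nat -> yv p r m i + yv p r m j <= F p r i j).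
  { clear i j hi hj hij. intros i j h1 h2 h3.
    destruct (Nat.le_gt_cases j (m+1)).
    - apply case2; auto.
    - destruct (Nat.le_gt_cases i (m+1)).
      + replace j with (m+1+(j-m-1))%nat by lia. apply case1; auto; lia.
      + replace j with (m+1+(j-m-1))%nat by lia. replace i with (m+1+(i-m-1))%nat by lia.
        apply case3; auto; lia. }
  destruct (Nat.lt_gt_cases i j) as [[h|h] _]; [lia| |].
  - apply W; lia.
  - rewrite Rplus_comm, F_sym. apply W; lia.
Qed.

Lemma sig1 m : sigma_opt (2*m+1) 1 = 1%nat.
Proof. reflexivity. Qed.

Lemma sig_even m t : (1 <= t <= m)%nat -> sigma_opt (2*m+1) (2*t) = (m + 2 - t)%nat.
Proof.
  intros h. unfold sigma_opt.
  destruct (Nat.eqb_spec (2*t) 1); [lia|].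
  rewrite Nat.even_mul. cbn [Nat.even orb].
  replace (2 * m + 1 - 2 * t + 3)%nat with ((m + 2 - t) * 2)%nat by lia.
  apply Nat.div_mul; lia.
Qed.

Lemma sig_odd m t : (1 <= t <= m)%nat -> sigma_opt (2*m+1) (2*t+1) = (2*m + 2 - t)%nat.
Proof.
  intros h. unfold sigma_opt.
  destruct (Nat.eqb_spec (2*t+1) 1); [lia|].
  rewrite Nat.even_add, Nat.even_mul. cbn [Nat.even orb Bool.eqb].
  replace (2 * (2 * m + 1) - (2 * t + 1) + 3)%nat with ((2 * m + 2 - t) * 2)%nat by lia.
  apply Nat.div_mul; lia.
Qed.

Lemma idx_cases m i : (1 <= i <= 2*m+1)%nat ->
  i = 1%nat \/ exists t, (1 <= t <= m)%nat /\ (i = 2*t \/ i = 2*t+1)%nat.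
Proof.
  intros h. destruct (Nat.Even_or_Odd i) as [[t Ht]|[t Ht]].
  - right. exists t. lia.
  - destruct (Nat.eq_dec t 0); [left; lia| right; exists t; lia].
Qed.

Lemma sig_perm m : (1 <= m)%nat -> is_perm (2*m+1) (sigma_opt (2*m+1)).
Proof.
  intros hm. split.
  - intros i hi. destruct (idx_cases m i hi) as [->|[t [ht [->| ->]]]].
    + rewrite sig1; lia.
    + rewrite sig_even; lia.
    + rewrite sig_odd; lia.
  - intros i j hi hj e.
    destruct (idx_cases m i hi) as [->|[t [ht [->| ->]]]];
    destruct (idx_cases m j hj) as [->|[u [hu [->| ->]]]];
    rewrite ?sig1, ?sig_even, ?sig_odd in e by lia; lia.
Qed.

Lemma sig_tight p r m i : (1 <= m)%nat -> (1 <= i <= 2*m+1)%nat ->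
  let s := sigma_opt (2*m+1) in
  yv p r m (s i) + yv p r m (s (cnext (2*m+1) i)) = F p r (s i) (s (cnext (2*m+1) i)).
Proof.
  intros hm hi s. unfold s, cnext.
  destruct (idx_cases m i hi) as [->|[t [ht [->| ->]]]].
  - destruct (Nat.eqb_spec 1 (2*m+1)); [lia|].
    replace 2%nat with (2*1)%nat by reflexivity.
    rewrite sig1, sig_even by lia. replace (m+2-1)%nat with (m+1)%nat by lia. apply tC.
  - destruct (Nat.eqb_spec (2*t) (2*m+1)); [lia|].
    replace (S (2*t)) with (2*t+1)%nat by lia.
    rewrite sig_even, sig_odd by lia.
    replace (m+2-t)%nat with (S (m+1-t)) by lia.
    replace (2*m+2-t)%nat with (m+1+(m+1-t))%nat by lia.
    apply tB; lia.
  - destruct (Nat.eqb_spec (2*t+1) (2*m+1)).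
    + assert (t = m) by lia. subst t.
      rewrite sig1, sig_odd by lia.
      replace (2*m+2-m)%nat with (m+1+1)%nat by lia.
      rewrite Rplus_comm, F_sym. apply tA; lia.
    + replace (S (2*t+1)) with (2*(t+1))%nat by lia.
      rewrite sig_odd, sig_even by lia.
      replace (m+2-(t+1))%nat with (m+1-t)%nat by lia.
      replace (2*m+2-t)%nat with (m+1+(m+1-t))%nat by lia.
      rewrite Rplus_comm, F_sym. apply tA; lia.
Qed.

Theorem proposition3 (N : nat) (p : R) (r : nat -> R)
  (hN3 : (3 <= N)%nat) (hNodd : Nat.odd N = true) (hp : p < 0)
  (h0 : 0 <= r 1%nat) (h1 : r N <= 1)
  (hinc : forall i : nat, (1 <= i)%nat -> (i < N)%nat -> r i < r (S i)) :
  forall tau : nat -> nat, is_perm N tau ->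
    cycle_cost N p r (sigma_opt N) <= cycle_cost N p r tau.
Proof.
  intros tau htau.
  apply Nat.odd_spec in hNodd. destruct hNodd as [m Hm]. subst N.
  assert (hm : (1 <= m)%nat) by lia.
  assert (hr : incr r (2*m+1)).
  { intros i j hi hij hj. induction j; [lia|].
    destruct (Nat.eq_dec i j) as [->|hne]; [apply hinc; lia|].
    eapply Rlt_trans; [apply IHj; lia| apply hinc; lia]. }
  set (N := (2*m+1)%nat).
  pose proof (cnext_perm N ltac:(unfold N; lia)) as hc.
  assert (Hsum : forall s, is_perm N s ->
    sumR (fun i => yv p r m (s i) + yv p r m (s (cnext N i))) N = 2 * sumR (yv p r m) N).
  { intros s hs. rewrite sumR_plus.
    rewrite (sumR_perm N s (yv p r m) hs).
    rewrite (sumR_perm N (fun i => s (cnext N i)) (yv p r m) (perm_comp N s (cnext N) hs hc)). ring. }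
  unfold cycle_cost.
  transitivity (sumR (fun i => yv p r m (sigma_opt N i) + yv p r m (sigma_opt N (cnext N i))) N).
  - right. apply sumR_eq. intros i hi. symmetry. apply (sig_tight p r m i hm). unfold N in hi; lia.
  - rewrite Hsum by (apply sig_perm; auto).
    rewrite <- (Hsum tau htau).
    apply sumR_le. intros i hi.
    destruct htau as [ht1 ht2].
    destruct (cnext_perm N ltac:(unfold N; lia)) as [hc1 hc2].
    assert (hcn : cnext N i <> i).
    { unfold cnext. destruct (Nat.eqb_spec i N); unfold N in *; lia. }
    apply (feas p r m); auto; try (apply ht1; auto; fail); try (apply ht1, hc1; auto; fail).
Qed.
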